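(* For each $r\in\{0,1,2,3,4,5\}$, the recession cone $C^r=\{x\in\mathbb R^6:\ \sigma\tilde c\cdot x\ge 0 \text{ for all } \tilde c\in\mathcal C_r,\ \sigma\in\mathfrak S_3\}$ of the polyhedron $Q^r$ is the cone generated by the five rays $[1,0,1,0,0,0]$, $[1,0,0,1,1,0]$, $[0,1,1,0,0,1]$, $[0,1,0,0,1,0]$, $[0,0,0,1,0,1]$ (which are the transition-count vectors of the loops $121$, $1231$, $1321$, $131$, $232$ respectively); in particular $C^0=C^1=\dots=C^5$.
   Context: Vectors of $\mathbb R^6$ are indexed by ordered pairs $ij$ of distinct elements of $\{1,2,3\}$ in the order $[x_{12},x_{13},x_{21},x_{23},x_{31},x_{32}]$; $\mathfrak S_3$ acts by $(\sigma c)_{ij}=c_{\sigma(i)\sigma(j)}$. Consider the following pairs $(\tilde c,a)$: $A_1=([1,0,0,0,0,0],0)$, $A_2=([1,1,-1,0,-1,0],-1)$, $B_{\mathrm{odd}}=([1,1,-1,-1,1,1],0)$, $B_{\mathrm{even}}=([3,1,-1,-1,-1,1],-1)$, $D_1=([2,-1,-1,-1,2,2],0)$, $D_2=([2,-1,-1,-1,2,2],-1)$, $D_3=([5,2,-4,-1,-1,2],-2)$, $D_0=([5,2,-4,-1,-1,2],-2)$. For $T=6k+r$ with $r\in\{0,\dots,5\}$, the applicable pairs are $A_1,A_2$; $B_{\mathrm{odd}}$ if $T$ is odd and $B_{\mathrm{even}}$ if $T$ is even; and $D_1$ if $T\equiv1 \pmod 3$, $D_2$ if $T\equiv 2\pmod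 3$, $D_3$ if $T\equiv 3\pmod 6$, $D_0$ if $T\equiv 0\pmod 6$ (this depends only on $r$). Let $\mathcal C_r$ be the set of the four vectors $\tilde c$ of the applicable pairs, and let $Q^r=\{x\in\mathbb R^6: \sigma\tilde c\cdot x\ge a \text{ for every applicable pair }(\tilde c,a)\text{ and every }\sigma\in\mathfrak S_3\}$. Writing $Q^r$ as a Minkowski sum $Q^r=P^r+C^r$ of a polytope and a cone, $C^r$ is the recession cone of $Q^r$, which equals the set displayed in the claim. *)

(* Defs.v *)
From HB Require Import structures.
From mathcomp Require Import all_boot all_order all_algebra all_fingroup.
Set Implicit Arguments. Unset Strict Implicit. Unset Printing Implicit Defensive.
Import Order.TTheory GRing.Theory Num.Theory.
Local Open Scope ring_scope.

(* Coordinates of R^6 are indexed by ordered pairs ij of distinct elements of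
   {1,2,3}, in the order [x12,x13,x21,x23,x31,x32].  We use 0-based labels:
   element 1,2,3 of {1,2,3} is 0,1,2 : 'I_3, and position k : 'I_6. *)
Definition pair_of (k : nat) : nat * nat :=
  match k with
  | 0 => (0, 1) | 1 => (0, 2) | 2 => (1, 0)
  | 3 => (1, 2) | 4 => (2, 0) | _ => (2, 1)
  end%N.

Definition index_of (i j : nat) : nat :=
  match i, j with
  | 0, 1 => 0 | 0, 2 => 1 | 1, 0 => 2
  | 1, 2 => 3 | 2, 0 => 4 | _, _ => 5
  end%N.

(* The action of S_3:  (sigma c)_{ij} = c_{sigma(i) sigma(j)}. *)
Definition act (s : 'S_3) (c : seq int) (k : 'I_6) : int :=
  nth 0 c (index_of (val (s (inord (pair_of k).1)))
                    (val (s (inord (pair_of k).2)))).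

Definition dot {R : realFieldType} (c : 'I_6 -> int) (x : 'I_6 -> R) : R :=
  \sum_(k < 6) (c k)%:~R * x k.

Definition A1   : seq int * int := ([:: 1; 0; 0; 0; 0; 0], 0).
Definition A2   : seq int * int := ([:: 1; 1; -1; 0; -1; 0], -1).
Definition Bodd : seq int * int := ([:: 1; 1; -1; -1; 1; 1], 0).
Definition Beven: seq int * int := ([:: 3; 1; -1; -1; -1; 1], -1).
Definition D1   : seq int * int := ([:: 2; -1; -1; -1; 2; 2], 0).
Definition D2   : seq int * int := ([:: 2; -1; -1; -1; 2; 2], -1).
Definition D3   : seq int * int := ([:: 5; 2; -4; -1; -1; 2], -2).
Definition D0   : seq int * int := ([:: 5; 2; -4; -1; -1; 2], -2).

(* Applicable pairs for T = 6k + r, r in {0,...,5} (depends only on r). *)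
Definition applicable (r : nat) : seq (seq int * int) :=
  [:: A1; A2;
      (if odd r then Bodd else Beven);
      (if (r %% 3 == 1)%N then D1
       else if (r %% 3 == 2)%N then D2
       else if (r == 3)%N then D3
       else D0)].

Definition Cvecs (r : nat) : seq (seq int) := map fst (applicable r).

Definition Ccone {R : realFieldType} (r : nat) (x : 'I_6 -> R) : Prop :=
  forall c, c \in Cvecs r -> forall s : 'S_3, 0 <= dot (act s c) x.

(* The five rays (transition-count vectors of loops 121, 1231, 1321, 131, 232). *)
Definition rays : seq (seq int) :=
  [:: [:: 1; 0; 1; 0; 0; 0];
      [:: 1; 0; 0; 1; 1; 0];
      [:: 0; 1; 1; 0; 0; 1];
      [:: 0; 1; 0; 0; 1; 0];
      [:: 0; 0; 0; 1; 0; 1]].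

Definition in_ray_cone {R : realFieldType} (x : 'I_6 -> R) : Prop :=
  exists l : 'I_5 -> R, (forall i, 0 <= l i) /\
    forall k : 'I_6, x k = \sum_(i < 5) l i * (nth 0 (nth [::] rays i) k)%:~R.

(* Main.v *)
Require Import Defs.
From HB Require Import structures.
From mathcomp Require Import all_boot all_order all_algebra all_fingroup.
Import Order.TTheory GRing.Theory Num.Theory.
Local Open Scope ring_scope.

Definition f3 (p : nat * nat * nat) (i : nat) : nat :=
  match i with 0 => p.1.1 | 1 => p.1.2 | _ => p.2 end%N.
Definition act3 (p : nat*nat*nat) (c : seq int) (k : 'I_6) : int :=
  nth 0 c (index_of (f3 p (pair_of k).1) (f3 p (pair_of k).2)).
Definition trip (s : 'S_3) : nat*nat*nat :=
  (val (s (inord 0)), val (s (inord 1)), val (s (inord 2))).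
Lemma act_eq s c k : Defs.act s c k = act3 (trip s) c k.
Proof. by case: k => [[|[|[|[|[|[|?]]]]]] ?]. Qed.

Lemma trip_cases s : trip s \in [:: (0,1,2); (0,2,1); (1,0,2); (1,2,0); (2,0,1); (2,1,0)]%N.
Proof.
rewrite /trip.
have i01 : s (inord 0) != s (inord 1) :> 'I_3 by rewrite (inj_eq perm_inj) -val_eqE /= !inordK.
have i02 : s (inord 0) != s (inord 2) :> 'I_3 by rewrite (inj_eq perm_inj) -val_eqE /= !inordK.
have i12 : s (inord 1) != s (inord 2) :> 'I_3 by rewrite (inj_eq perm_inj) -val_eqE /= !inordK.
move: i01 i02 i12; rewrite -!val_eqE.
case: (s (inord 0)) => [[|[|[|?]]] ?] //;
case: (s (inord 1)) => [[|[|[|?]]] ?] //;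
case: (s (inord 2)) => [[|[|[|?]]] ?] //.
Qed.


Definition plist : seq (nat*nat*nat) := [:: (0,1,2); (0,2,1); (1,0,2); (1,2,0); (2,0,1); (2,1,0)]%N.
Definition gfun (p : nat*nat*nat) (i : 'I_3) : 'I_3 := inord (f3 p i).
Lemma exists_perm p : p \in plist -> exists s : 'S_3, trip s = p.
Proof.
have gen : forall p, (f3 p 0 < 3)%N -> (f3 p 1 < 3)%N -> (f3 p 2 < 3)%N ->
   injective (gfun p) -> exists s : 'S_3, trip s = p.
  move=> [[a b] c] h0 h1 h2 inj; exists (perm inj).
  rewrite /trip !permE /gfun /= !inordK //.
rewrite /plist !inE; do 5?[case/orP; first move=> /eqP ->]; try move=> /eqP ->;
  apply: gen => // i j; rewrite /gfun => /(congr1 val);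
  by case: i => [[|[|[|?]]] ?]; case: j => [[|[|[|?]]] ?] //=;
     rewrite ?inordK // => h; apply/val_inj.
Qed.

From mathcomp Require Import ring lra.

Lemma Ccone_iff (R : realFieldType) r (x : 'I_6 -> R) :
  Ccone r x <-> (forall c, c \in Cvecs r -> forall p, p \in plist -> 0 <= dot (act3 p c) x).
Proof.
split=> H c hc.
  move=> p /exists_perm [s <-].
  have := H c hc s; rewrite /dot.
  by under eq_bigr => k _ do rewrite act_eq.
move=> s; have := H c hc (trip s) (trip_cases s); rewrite /dot.
by under [X in _ <= X -> _]eq_bigr => k _ do rewrite -act_eq.
Qed.

Lemma allseqP (T : eqType) (s : seq T) (Q : T -> Prop) :
  (forall c, c \in s -> Q c) <-> foldr (fun c acc => Q c /\ acc) True s.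
Proof.
elim: s => [|a s IH] /=; first by split=> // _ c; rewrite in_nil.
split.
  by move=> H; split; [apply: H; rewrite mem_head | apply/IH => c hc; apply: H; rewrite in_cons hc orbT].
move=> [Ha /IH Hs] c; rewrite in_cons => /orP [/eqP -> //|]; exact: Hs.
Qed.

Notation o6 i := (@Ordinal 6 i isT).
Lemma sum6 (R : realFieldType) (F : 'I_6 -> R) :
  \sum_(k < 6) F k = F (o6 0) + F (o6 1) + F (o6 2) + F (o6 3) + F (o6 4) + F (o6 5).
Proof.
rewrite !big_ord_recl big_ord0 addr0 !addrA.
by do !congr (_ + _); congr F; apply/val_inj.
Qed.
Lemma sum5 (R : realFieldType) (F : 'I_5 -> R) :
  \sum_(k < 5) F k = F (@Ordinal 5 0 isT) + F (@Ordinal 5 1 isT) + F (@Ordinal 5 2 isT)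
     + F (@Ordinal 5 3 isT) + F (@Ordinal 5 4 isT).
Proof.
rewrite !big_ord_recl big_ord0 addr0 !addrA.
by do !congr (_ + _); congr F; apply/val_inj.
Qed.

Lemma Ccone_iff2 (R : realFieldType) r (x : 'I_6 -> R) :
  Ccone r x <-> foldr (fun c acc => foldr (fun p acc2 => 0 <= dot (act3 p c) x /\ acc2) True plist /\ acc) True (Cvecs r).
Proof.
rewrite Ccone_iff. 
split.
  move=> H; apply/allseqP => c hc; apply/(@allseqP _ _ (fun p => 0 <= dot (act3 p c) x)); exact: H.
move/allseqP => H c hc; apply/(@allseqP _ _ (fun p => 0 <= dot (act3 p c) x)); exact: H.
Qed.

Lemma cone_facts (R : realFieldType) r (x : 'I_6 -> R) : (r < 6)%N -> Ccone r x ->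
  (0 <= x (o6 0) /\ 0 <= x (o6 1) /\ 0 <= x (o6 2) /\ 0 <= x (o6 3) /\ 0 <= x (o6 4) /\ 0 <= x (o6 5))
  /\ x (o6 0) - x (o6 2) = x (o6 3) - x (o6 5) /\ x (o6 0) - x (o6 2) = x (o6 4) - x (o6 1).
Proof.
move=> hr /Ccone_iff2.
case: r hr => [|[|[|[|[|[|//]]]]]] _;
rewrite /= /dot !sum6 /act3 /= => -[[h1 [h2 [h3 [h4 [h5 [h6 _]]]]]] [[h7 [h8 [h9 [h10 [h11 [h12 _]]]]]] _]];
(split; [do !split|split]; lra).
Qed.

Lemma facts_ray (R : realFieldType) (x : 'I_6 -> R) :
  (0 <= x (o6 0) /\ 0 <= x (o6 1) /\ 0 <= x (o6 2) /\ 0 <= x (o6 3) /\ 0 <= x (o6 4) /\ 0 <= x (o6 5))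
  /\ x (o6 0) - x (o6 2) = x (o6 3) - x (o6 5) /\ x (o6 0) - x (o6 2) = x (o6 4) - x (o6 1) ->
  in_ray_cone x.
Proof.
move=> [[h0 [h1 [h2 [h3 [h4 h5]]]]] [e1 e2]].
have [hf|hf] := lerP 0 (x (o6 0) - x (o6 2)).
  exists (fun i : 'I_5 => nth 0 [:: x (o6 2); x (o6 0) - x (o6 2); 0; x (o6 1); x (o6 5)] i).
  split.
    by case=> [[|[|[|[|[|//]]]]]] ? /=.
  case=> [[|[|[|[|[|[|//]]]]]] hk]; rewrite sum5 /= ;
  rewrite (bool_irrelevance hk isT); lra.
exists (fun i : 'I_5 => nth 0 [:: x (o6 0); 0; x (o6 2) - x (o6 0); x (o6 4); x (o6 3)] i).
split.
  by case=> [[|[|[|[|[|//]]]]]] ? /=; lra.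
case=> [[|[|[|[|[|[|//]]]]]] hk]; rewrite sum5 /= ;
rewrite (bool_irrelevance hk isT); lra.
Qed.

Lemma ray_cone (R : realFieldType) r (x : 'I_6 -> R) : (r < 6)%N -> in_ray_cone x -> Ccone r x.
Proof.
move=> hr [l [hl hx]].
have hl0 := hl (@Ordinal 5 0 isT). have hl1 := hl (@Ordinal 5 1 isT).
have hl2 := hl (@Ordinal 5 2 isT). have hl3 := hl (@Ordinal 5 3 isT).
have hl4 := hl (@Ordinal 5 4 isT).
apply/Ccone_iff2.
case: r hr => [|[|[|[|[|[|//]]]]]] _;
rewrite /= /dot !sum6 /act3 /= !hx !sum5 /=; do !split; lra.
Qed.

Theorem proposition13 (R : realFieldType) (r : nat) :
  (r < 6)%N -> forall x : 'I_6 -> R, Ccone r x <-> in_ray_cone x.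
Proof.
move=> hr x; split; first by move/(cone_facts R r x hr)/(facts_ray R x).
exact: (ray_cone R r x hr).
Qed.
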